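(* Let $\phi:\mathcal{F}\to\mathbb{R}$ be any function, $\delta\in(0,1)$, $\epsilon_4:=2B_{\text{ref}}\sqrt{\frac{\log(\delta^{-1})}{2n}}$, and $\hat a_-(\epsilon_4):=\min_{f\in\hat{\mathcal{R}}(\epsilon_4)}\phi(f)$, $\hat a_+(\epsilon_4):=\max_{f\in\hat{\mathcal{R}}(\epsilon_4)}\phi(f)$. Let $f^\star\in\mathcal{F}$ be the unique minimizer of $e_{\text{orig}}$ over $\mathcal{F}$. If $f^\star$ satisfies $|L(f^\star,z)-L(f_{\text{ref}},z)|\le B_{\text{ref}}$ for all $z\in\mathcal{Z}$, then $$\mathbb{P}\{\phi(f^\star)\in[\hat a_-(\epsilon_4),\hat a_+(\epsilon_4)]\}\ge1-\delta.$$
   Context: Let $Z$ be a random variable on $\mathcal{Z}=\mathcal{Y}\times\mathcal{X}$; $\mathcal{F}$ a set of measurable functions $\mathcal{X}\to\mathcal{Y}$; $L:\mathcal{F}\times\mathcal{Z}\to\mathbb{R}_{\ge0}$ a nonnegative loss; data are $n\ge2$ i.i.d. copies $Z_1,\dots,Z_n$ of $Z$. $e_{\text{orig}}(f)=\mathbb{E}L(f,Z)$, $\hat e_{\text{orig}}(f)=\frac1n\sum_iL(f,Z_i)$. A reference model $f_{\text{ref}}\in\mathcal{F}$ is fixed in advance (not data dependent), and $\hat{\mathcal{R}}(\epsilon)=\{f_{\text{ref}}\}\cup\{f\in\mathcal{F}:\hat e_{\text{orig}}(f)\le\hat e_{\text{orig}}(f_{\text{ref}})+\epsilon\}$. The minima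 and maxima above are assumed to exist. *)

(* Defs.v *)
From HB Require Import structures.
From mathcomp Require Import all_boot all_order all_algebra.
From mathcomp Require Import all_classical all_reals all_analysis.
Set Implicit Arguments. Unset Strict Implicit. Unset Printing Implicit Defensive.
Import Order.TTheory GRing.Theory Num.Theory.
Local Open Scope classical_set_scope.
Local Open Scope ring_scope.

(* Mutual independence of a finite family of random variables Zs i : Omega -> T,
   i : 'I_n : product rule for preimages of measurable sets (taking A i = setT
   recovers every finite subfamily). *)
Definition mutually_independent {d dT : measure_display} {R : realType}
  {Omega : measurableType d} {T : measurableType dT}
  (P : probability Omega R) (n : nat) (Zs : 'I_n -> Omega -> T) : Prop :=
  forall A : 'I_n -> set T, (forall i, measurable (A i)) ->
    P (\bigcap_(i in [set: 'I_n]) (Zs i @^-1` A i)) =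
    (\prod_(i < n) P (Zs i @^-1` A i))%E.

Definition identically_distributed {d dT : measure_display} {R : realType}
  {Omega : measurableType d} {T : measurableType dT}
  (P : probability Omega R) (Z1 Z2 : Omega -> T) : Prop :=
  forall A : set T, measurable A -> P (Z1 @^-1` A) = P (Z2 @^-1` A).

(* e_orig(f) = E L(f, Z), as an extended real (L >= 0, so always defined). *)
Definition e_orig {d : measure_display} {R : realType} {Omega : measurableType d}
  {F Zt : Type} (P : probability Omega R) (L : F -> Zt -> R)
  (Z : Omega -> Zt) (f : F) : \bar R :=
  (\int[P]_w (L f (Z w))%:E)%E.

Definition e_hat {Omega F Zt : Type} {R : realType} (n : nat)
  (L : F -> Zt -> R) (Zs : 'I_n -> Omega -> Zt) (f : F) (w : Omega) : R :=
  n%:R^-1 * \sum_(i < n) L f (Zs i w).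

Definition rashomon_hat {Omega F Zt : Type} {R : realType} (n : nat)
  (Fs : set F) (L : F -> Zt -> R) (Zs : 'I_n -> Omega -> Zt) (fref : F)
  (eps : R) (w : Omega) : set F :=
  [set fref] `|` [set f | Fs f /\ e_hat L Zs f w <= e_hat L Zs fref w + eps].

Definition is_min_over {F : Type} {R : realType} (phi : F -> R) (S : set F) (m : R) :=
  (exists2 f, S f & phi f = m) /\ (forall f, S f -> m <= phi f).
Definition is_max_over {F : Type} {R : realType} (phi : F -> R) (S : set F) (m : R) :=
  (exists2 f, S f & phi f = m) /\ (forall f, S f -> phi f <= m).

(* Main.v *)
Require Import Defs.
From HB Require Import structures.
From mathcomp Require Import all_boot all_order all_algebra.
From mathcomp Require Import all_classical all_reals all_analysis.
From mathcomp Require Import measurable_realfun.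
From mathcomp Require Import zify ring lra.
Import Order.TTheory GRing.Theory Num.Theory.
Import numFieldNormedType.Exports.
Local Open Scope classical_set_scope.
Local Open Scope ring_scope.
Section cosh.
Variable R : realType.

Lemma fact_double (j : nat) : (2 ^ j * j`! <= (2 * j)`!)%N.
Proof.
elim: j => [//|j IH].
rewrite (_ : (2 * j.+1) = (2 * j).+2)%N; last by rewrite mulnS.
rewrite !factS expnS.
rewrite (_ : (2 * 2 ^ j * (j.+1 * j`!) = (2 * j.+1) * (2 ^ j * j`!))%N); last first.
  by ring.
apply: leq_mul; first by rewrite mulnS.
apply: (leq_trans IH); exact: leq_pmull.
Qed.

Lemma sum_double (a : nat -> R) (N : nat) :
  \sum_(0 <= k < (2 * N)%N) a k = \sum_(0 <= j < N) (a (2 * j)%N + a (2 * j).+1).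
Proof.
elim: N => [|N IH]; first by rewrite !big_geq.
rewrite [RHS]big_nat_recr //=. rewrite -IH.
rewrite (_ : (2 * N.+1 = (2 * N).+2)%N); last by rewrite mulnS.
by rewrite big_nat_recr //= big_nat_recr //= addrA.
Qed.

Lemma cosh_le (y : R) : expR y + expR (- y) <= 2 * expR (y ^+ 2 / 2).
Proof.
pose c : R^nat := fun k => exp_coeff y k + exp_coeff (- y) k.
have cE : c = exp_coeff y + exp_coeff (- y) by [].
have ->: expR y + expR (- y) = limn (series c).
  by rewrite cE lim_seriesD //; exact: is_cvg_series_exp_coeff.
have cz : cvgn (series (exp_coeff (y ^+ 2 / 2))) by exact: is_cvg_series_exp_coeff.
have -> : 2 * expR (y ^+ 2 / 2) = limn (2 *: series (exp_coeff (y ^+ 2 / 2))).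
  by rewrite limZr.
apply: ler_lim.
- rewrite cE; apply: is_cvg_seriesD; exact: is_cvg_series_exp_coeff.
- exact: is_cvgZr.
have a0 : forall k, 0 <= c k.
  move=> k; rewrite /c /exp_coeff /= -mulrDl divr_ge0 //.
  rewrite exprNn -signr_odd; have [ok|ek] := boolP (odd k).
    by rewrite expr1 mulN1r subrr.
  by rewrite expr0 mul1r addr_ge0 // exprn_even_ge0.
near=> N.
apply: (@le_trans _ _ (series c (2 * N)%N)).
  rewrite /series /=.
  rewrite [leRHS](big_cat_nat _ (n := N)) //=; last lia.
  by rewrite lerDl sumr_ge0.
have -> : (2 *: series (exp_coeff (y ^+ 2 / 2))) N = 2 * series (exp_coeff (y ^+ 2 / 2)) N by [].
rewrite /series /= sum_double /= mulr_sumr.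
apply: ler_sum => j _.
have ce : c (2 * j)%N = 2 * (y ^+ (2 * j) / (2 * j)`!%:R).
  rewrite /c /exp_coeff /=.
  have -> : (- y) ^+ (2 * j) = y ^+ (2 * j) by rewrite exprM sqrrN -exprM.
  by rewrite -mulr2n mulr_natl.
have co : c (2 * j).+1 = 0.
  rewrite /c /exp_coeff /=.
  have -> : (- y) ^+ (2 * j).+1 = - y ^+ (2 * j).+1 by rewrite exprS exprM sqrrN -exprM mulNr -exprS.
  by rewrite mulNr subrr.
rewrite ce co addr0 ler_wpM2l // /exp_coeff /=.
rewrite expr_div_n -exprM -mulrA ler_wpM2l ?exprn_even_ge0 ?oddM //.
rewrite -invfM ler_pV2.
- by rewrite -natrX -natrM ler_nat fact_double.
- by rewrite inE unitfE pnatr_eq0 -lt0n fact_gt0 ltr0n fact_gt0.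
- by rewrite inE unitfE mulf_neq0 ?expf_neq0 ?pnatr_eq0 -?lt0n ?fact_gt0 // mulr_gt0 ?exprn_gt0 // ltr0n fact_gt0.
Unshelve. all: by end_near.
Qed.
End cosh.

Section convsec.
Local Open Scope convex_scope.
Lemma conv_bound (R : realType) (B s x : R) : 0 < B -> -B <= x <= B ->
  expR (s * x) <= ((B + x) * expR (s * B) + (B - x) * expR (- (s * B))) / (2 * B).
Proof.
move=> B0 /andP[xl xu].
have t0 : 0 <= (B + x) / (2 * B) by rewrite divr_ge0 //; lra.
have t1 : (B + x) / (2 * B) <= 1 by rewrite ler_pdivrMr; lra.
have := convex_expR (Itv01 t0 t1) (s * B) (- (s * B)).
rewrite !convRE /=.
rewrite /unstable.onem.
have -> : (B + x) / (2 * B) * (s * B) + (1 - (B + x) / (2 * B)) * - (s * B) = s * x.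
  by field; lra.
move/le_trans; apply.
rewrite le_eqVlt; apply/orP; left; apply/eqP; field; lra.
Qed.

End convsec.
Import HBNNSimple.
Section step.
Context {R : realType} {d dT : measure_display} {Omega : measurableType d}
  {T : measurableType dT}.
Variable mu : {measure set Omega -> \bar R}.
Variables (Z : Omega -> T) (mZ : measurable_fun setT Z).
Local Open Scope ereal_scope.

Lemma mind (A : set T) : measurable A -> measurable_fun setT (fun w => \1_A (Z w) : R).
Proof. move=> mA; exact: (measurableT_comp (@measurable_indic _ _ R setT A mA) mZ). Qed.

Lemma sf_decomp (G : Omega -> R) (mG : measurable_fun setT G) (G0 : forall w, (0 <= G w)%R)
  (f : {nnsfun T >-> R}) :
  \int[mu]_w (f (Z w) * G w)%:E =
  \sum_(y \in range f) (y%:E * \int[mu]_w (\1_(f @^-1` [set y]) (Z w) * G w)%:E).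
Proof.
under eq_integral => w _ do rewrite fimfunE mulr_fsuml -fsumEFin //.
rewrite ge0_integral_fsum //.
- apply: eq_fsbigr => y /[!inE] -[t _ <-].
  under eq_integral do rewrite -mulrA EFinM.
  rewrite ge0_integralZl_EFin //.
  + move=> w _; rewrite lee_fin mulr_ge0 //.
  + apply/measurable_EFinP; apply: measurable_funM => //; exact: mind.
- move=> y; apply/measurable_EFinP; apply: measurable_funM => //.
  apply: measurable_funM => //; exact: mind.
- move=> y w _; rewrite lee_fin; apply: mulr_ge0 => //.
  by have := nnfun_muleindic_ge0 f y (Z w); rewrite -EFinM lee_fin.
Qed.

Lemma indic_comp (A : set T) w : \1_A (Z w) = \1_(Z @^-1` A) w :> R.
Proof. by []. Qed.

Lemma int_indic_comp (A : set T) : measurable A ->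
  \int[mu]_w (\1_A (Z w) * 1)%:E = mu (Z @^-1` A).
Proof.
move=> mA; under eq_integral do rewrite mulr1 indic_comp.
rewrite integral_indic ?setIT //.
by rewrite -[X in measurable X]setTI; exact: mZ.
Qed.

Lemma int_indic_comp' (A : set T) : measurable A ->
  \int[mu]_w (\1_A (Z w) * cst 1%R w)%:E = mu (Z @^-1` A).
Proof. exact: int_indic_comp. Qed.

Lemma step (G : Omega -> R) (mG : measurable_fun setT G) (G0 : forall w, (0 <= G w)%R)
  (c : \bar R) (cf : c \is a fin_num)
  (H : forall A, measurable A -> \int[mu]_w (\1_A (Z w) * G w)%:E = c * mu (Z @^-1` A))
  (h : T -> R) (mh : measurable_fun setT h) (h0 : forall t, (0 <= h t)%R) :
  \int[mu]_w (h (Z w) * G w)%:E = c * \int[mu]_w (h (Z w))%:E.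
Proof.
have mh' : measurable_fun setT (EFin \o h) by exact/measurable_EFinP.
pose hn := nnsfun_approx measurableT mh'.
have cvh t : (fun n => (hn n t)%:E) @ \oo --> (h t)%:E.
  exact: (cvg_nnsfun_approx measurableT mh' (fun x _ => h0 x)).
have ndh t : {homo (fun n => hn n t) : a b / (a <= b)%N >-> (a <= b)%R}.
  by move=> a b ab; exact/lefP/nd_nnsfun_approx.
have simple n : \int[mu]_w (hn n (Z w) * G w)%:E = c * \int[mu]_w (hn n (Z w))%:E.
  rewrite sf_decomp //.
  under [in RHS]eq_integral do rewrite -[X in X%:E]mulr1.
  rewrite (@sf_decomp (cst 1%R)) //.
  have F0 y : 0 <= y%:E * mu (Z @^-1` (hn n @^-1` [set y])).
    have [y0|y0] := leP 0%R y; first by rewrite mule_ge0.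
    suff -> : hn n @^-1` [set y] = set0 by rewrite preimage_set0 measure0 mule0.
    apply/seteqP; split => // t /= ht; move: y0; rewrite -ht.
    by rewrite ltNge fun_ge0.
  rewrite ge0_mule_fsumr; last first.
    by move=> y; rewrite int_indic_comp'.
  apply: eq_fsbigr => y _.
  by rewrite H // int_indic_comp' // muleCA.
have mhn n : measurable_fun setT (fun w => (hn n (Z w))%:E).
  by apply/measurable_EFinP; apply: measurableT_comp => //.
have mhnG n : measurable_fun setT (fun w => (hn n (Z w) * G w)%:E).
  by apply/measurable_EFinP; apply: measurable_funM => //; apply: measurableT_comp => //.
have L1 : \int[mu]_w (h (Z w) * G w)%:E =
    limn (fun n => \int[mu]_w (hn n (Z w) * G w)%:E).
  rewrite -monotone_convergence //.
  - apply: eq_integral => w _; apply/esym/cvg_lim => //.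
    under eq_fun do rewrite EFinM.
    rewrite EFinM; apply: cvgeZr => //; exact: cvh.
  - by move=> n w _; rewrite lee_fin mulr_ge0.
  - move=> w _ a b ab; rewrite lee_fin ler_wpM2r //; exact: ndh.
have L2 : \int[mu]_w (h (Z w))%:E = limn (fun n => \int[mu]_w (hn n (Z w))%:E).
  rewrite -monotone_convergence //.
  - apply: eq_integral => w _; apply/esym/cvg_lim => //; exact: cvh.
  - by move=> n w _; rewrite lee_fin.
  - move=> w _ a b ab; rewrite lee_fin; exact: ndh.
rewrite L1 L2; under eq_fun do rewrite simple.
rewrite limeMl //.
apply: cvgP; apply: ereal_nondecreasing_is_cvgn => a b ab; apply: ge0_le_integral => //.
  + by move=> w _; rewrite lee_fin.
  + move=> w _; rewrite lee_fin; exact: ndh.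
Qed.
End step.

Section prodind.
Context {R : realType} {d dT : measure_display} {Omega : measurableType d}
  {T : measurableType dT}.
Variable P : probability Omega R.
Variables (n : nat) (Zs : 'I_n -> Omega -> T).
Hypothesis mZs : forall i, measurable_fun setT (Zs i).
Hypothesis Hind : mutually_independent P Zs.
Variables (e : T -> R) (me : measurable_fun setT e) (e0 : forall t, (0 <= e t)%R).
Local Open Scope ereal_scope.
Hypothesis ef : forall i, \int[P]_w (e (Zs i w))%:E \is a fin_num.

Definition fam (k : nat) (A : 'I_n -> set T) (i : 'I_n) : T -> R :=
  if (i < k)%N then e else \1_(A i).

Lemma fam_ge0 k A i t : (0 <= fam k A i t)%R.
Proof. by rewrite /fam; case: ifP. Qed.

Lemma fam_meas k A i : measurable (A i) -> measurable_fun setT (fam k A i).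
Proof. by move=> mA; rewrite /fam; case: ifP => _ //; exact: measurable_indic. Qed.

Lemma fam_fin k A i : measurable (A i) -> \int[P]_w (fam k A i (Zs i w))%:E \is a fin_num.
Proof.
move=> mA; rewrite /fam; case: ifP => _ //.
under eq_integral do rewrite -[X in X%:E]mulr1.
by rewrite int_indic_comp // fin_num_measure //; rewrite -[X in measurable X]setTI; exact: mZs.
Qed.

Lemma prod_indic (A : 'I_n -> set T) w :
  (\prod_i \1_(A i) (Zs i w))%R = (\1_(\bigcap_(i in [set: 'I_n]) (Zs i @^-1` A i)) w : R).
Proof.
have [allin|] := pselect (forall i, A i (Zs i w)).
  rewrite big1 ?indicE ?mem_set //; last by move=> i _; rewrite indicE mem_set.
  by move=> i _; exact: allin.
move=> /existsNP [i0 ni0].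
rewrite (bigD1 i0) //= indicE memNset // mul0r indicE memNset //.
by move=> /(_ i0 I).
Qed.

Lemma claim0 A : (forall i, measurable (A i)) ->
  \int[P]_w (\prod_i fam 0 A i (Zs i w))%:E = \prod_i \int[P]_w (fam 0 A i (Zs i w))%:E.
Proof.
move=> mA; rewrite /fam /=.
under eq_integral do rewrite prod_indic.
rewrite integral_indic //; last first.
  apply: fin_bigcap_measurable => // i _; rewrite -[X in measurable X]setTI; exact: mZs.
rewrite setIT; apply: (etrans (Hind A mA)).
apply: eq_bigr => i _.
under eq_integral do rewrite -[X in X%:E]mulr1.
rewrite int_indic_comp //.
Qed.

Definition claim k := forall A : 'I_n -> set T, (forall i, measurable (A i)) ->
  \int[P]_w (\prod_i fam k A i (Zs i w))%:E = \prod_i \int[P]_w (fam k A i (Zs i w))%:E.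

Lemma claimS k : (k < n)%N -> claim k -> claim k.+1.
Proof.
move=> kn IH A mA.
pose i0 : 'I_n := Ordinal kn.
have famS i : i != i0 -> fam k.+1 A i = fam k A i.
  move=> ii0; rewrite /fam ltnS leq_eqVlt.
  by have -> : (nat_of_ord i == k) = false by apply/negbTE; move: ii0; apply: contra => /eqP ik; apply/eqP/val_inj.
have fam0 : fam k.+1 A i0 = e by rewrite /fam ltnSn.
pose G w := (\prod_(i | i != i0) fam k A i (Zs i w))%R.
pose c := \prod_(i | i != i0) \int[P]_w (fam k A i (Zs i w))%:E.
have mG : measurable_fun setT G.
  have -> : G = fun w => (\prod_i (if i != i0 then fam k A i (Zs i w) else 1))%R.
    by apply/funext => w; rewrite /G big_mkcond.
  apply: measurable_prod => i _; case: (i != i0); last exact: measurable_cst.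
  by apply: measurableT_comp => //; exact: fam_meas.
have G0 w : (0 <= G w)%R by apply: prodr_ge0 => i _; exact: fam_ge0.
have cf : c \is a fin_num by apply: prode_fin_num => i _; exact: fam_fin.
have H A0 : measurable A0 -> \int[P]_w (\1_A0 (Zs i0 w) * G w)%:E = c * P (Zs i0 @^-1` A0).
  move=> mA0.
  pose A' i := if i == i0 then A0 else A i.
  have mA' i : measurable (A' i) by rewrite /A'; case: ifP.
  have famA' i : i != i0 -> fam k A' i = fam k A i by move=> /negbTE ii0; rewrite /fam /A' ii0.
  have famA'0 : fam k A' i0 = \1_A0 by rewrite /fam /A' eqxx ltnn.
  have := IH A' mA'.
  rewrite (bigD1 i0) //= famA'0.
  under eq_integral do rewrite (bigD1 i0) //= famA'0.
  under eq_integral do under eq_bigr => i ii0 do rewrite famA' //.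
  under eq_bigr => i ii0 do rewrite famA' //.
  move=> ->.
  under eq_integral do rewrite -[X in X%:E]mulr1.
  by rewrite int_indic_comp // muleC.
move: (@step _ _ _ _ _ P (Zs i0) (mZs i0) G mG G0 c cf H e me e0) => Hstep.
transitivity (\int[P]_w (e (Zs i0 w) * G w)%:E).
  apply: eq_integral => w _; congr EFin; rewrite (bigD1 i0) //= fam0; congr (_ * _)%R.
  by apply: eq_bigr => i ii0; rewrite famS.
rewrite Hstep (bigD1 i0) //= fam0 muleC; congr (_ * _).
by rewrite /c; apply: eq_bigr => i ii0; rewrite famS.
Qed.

Lemma claim_all : \int[P]_w (\prod_i e (Zs i w))%:E = \prod_i \int[P]_w (e (Zs i w))%:E.
Proof.
have : claim n.
  have : forall k, (k <= n)%N -> claim k.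
    elim=> [_|k IHk kn]; first exact: claim0.
    by apply: claimS => //; apply: IHk; exact: ltnW.
  by apply.
move=> /(_ (fun _ => setT) (fun _ => measurableT)).
by rewrite /fam; under eq_integral do under eq_bigr => i _ do rewrite ltn_ord; under eq_bigr => i _ do rewrite ltn_ord.
Qed.
End prodind.

Section iddist.
Context {R : realType} {d dT : measure_display} {Omega : measurableType d}
  {T : measurableType dT}.
Variable P : probability Omega R.
Local Open Scope ereal_scope.
Lemma id_int (Z1 Z2 : Omega -> T) (m1 : measurable_fun setT Z1) (m2 : measurable_fun setT Z2)
  (H : identically_distributed P Z1 Z2) (f : T -> R) (mf : measurable_fun setT f)
  (f0 : forall t, (0 <= f t)%R) :
  \int[P]_w (f (Z1 w))%:E = \int[P]_w (f (Z2 w))%:E.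
Proof.
have mf' : measurable_fun setT (EFin \o f) by exact/measurable_EFinP.
transitivity (\int[pushforward P Z1]_(y in setT) (f y)%:E).
  by rewrite ge0_integral_pushforward // => y _; rewrite lee_fin.
transitivity (\int[pushforward P Z2]_(y in setT) (f y)%:E).
  apply: eq_measure_integral => B mB _; exact: H.
by rewrite ge0_integral_pushforward // => y _; rewrite lee_fin.
Qed.
End iddist.

Lemma prod_const_ord (R : realType) (n : nat) (K : R) : (\prod_(i < n) K)%R = K ^+ n.
Proof.
elim: n => [|n IH]; first by rewrite big_ord0 expr0.
by rewrite big_ord_recr /= IH exprSr.
Qed.


Theorem proposition11
  (R : realType) (d dX dY : measure_display)
  (Omega : measurableType d) (P : probability Omega R)
  (X : measurableType dX) (Y : measurableType dY)
  (Fs : set (X -> Y))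
  (HFs : forall f, Fs f -> measurable_fun setT f)
  (L : (X -> Y) -> (Y * X)%type -> R)
  (HL0 : forall f z, 0 <= L f z)
  (HLmeas : forall f, Fs f -> measurable_fun setT (L f))
  (n : nat) (Hn : (2 <= n)%N)
  (Z : Omega -> (Y * X)%type) (HZ : measurable_fun setT Z)
  (Zs : 'I_n -> Omega -> (Y * X)%type)
  (HZs : forall i, measurable_fun setT (Zs i))
  (Hind : mutually_independent P Zs)
  (Hid : forall i, identically_distributed P (Zs i) Z)
  (fref : X -> Y) (Hfref : Fs fref)
  (phi : (X -> Y) -> R)
  (delta : R) (Hdelta : 0 < delta < 1)
  (Bref : R)
  (fstar : X -> Y) (Hfstar : Fs fstar)
  (Hmin : forall f, Fs f -> (e_orig P L Z fstar <= e_orig P L Z f)%E)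
  (Huniq : forall f, Fs f -> (e_orig P L Z f <= e_orig P L Z fstar)%E -> f = fstar)
  (HB : forall z, `|L fstar z - L fref z| <= Bref)
  (amin amax : Omega -> R)
  (Hamin : forall w, is_min_over phi
     (rashomon_hat Fs L Zs fref (2 * Bref * Num.sqrt (ln delta^-1 / (2 * n%:R))) w)
     (amin w))
  (Hamax : forall w, is_max_over phi
     (rashomon_hat Fs L Zs fref (2 * Bref * Num.sqrt (ln delta^-1 / (2 * n%:R))) w)
     (amax w)) :
  exists2 A : set Omega, measurable A /\
      A `<=` [set w | amin w <= phi fstar <= amax w] &
    ((1 - delta)%:E <= P A)%E.
Proof.
have [w0 _] : [set: Omega] !=set0.
  apply/set0P/negP => /eqP T0.
  have := probability_setT P; rewrite T0 measure0 => H.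
  by have := @lte01 R; rewrite -H ltxx.
have B0 : 0 <= Bref by apply: le_trans (HB (Z w0)).
have [d0 d1] := andP Hdelta.
have n0 : (0 < n)%N by apply: leq_trans Hn.
have n0R : 0 < n%:R :> R by rewrite ltr0n.
set q := ln delta^-1 / (2 * n%:R).
have q0 : 0 <= q.
  rewrite divr_ge0 ?mulr_ge0 // ln_ge0 // invf_ge1 //; exact: ltW.
set eps := 2 * Bref * Num.sqrt q.
have eps0 : 0 <= eps by rewrite mulr_ge0 ?mulr_ge0 ?sqrtr_ge0.
pose g z := L fstar z - L fref z.
have mg : measurable_fun setT g.
  by apply: measurable_funB; apply: HLmeas.
pose Sg w := \sum_(i < n) g (Zs i w).
have mSg : measurable_fun setT Sg.
  by apply: measurable_sum => i; exact: measurableT_comp.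
pose A := [set w | Sg w <= n%:R * eps].
have mA : measurable A.
  have := mSg measurableT _ (measurable_itv `]-oo, n%:R * eps]).
  rewrite setTI; congr measurable; apply/seteqP; split => w /=;
  by rewrite in_itv /= ?andbT.
suff PS : (P (~` A) <= delta%:E)%E.
  exists A; last first.
    have := probability_setC P (measurableC mA); rewrite setCK => ->.
    by rewrite EFinB leeB.
  split => // w Aw.
  have Hr : rashomon_hat Fs L Zs fref eps w fstar.
    right; split => //.
    rewrite /e_hat.
    have : Sg w <= n%:R * eps by exact: Aw.
    rewrite /Sg /g sumrB.
    set a := \sum_(i < n) L fstar (Zs i w).
    set b := \sum_(i < n) L fref (Zs i w).
    move=> hab.
    have : n%:R^-1 * (a - b) <= n%:R^-1 * (n%:R * eps).
      by rewrite ler_wpM2l // invr_ge0 ltW.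
    rewrite mulrA mulVf ?mul1r; last by rewrite gt_eqF.
    lra.
  by rewrite /= ((Hamin w).2 _ Hr) ((Hamax w).2 _ Hr).
have [g0|gn0] := pselect (forall z, g z = 0).
  suff -> : ~` A = set0 by rewrite measure0 lee_fin ltW.
  apply/seteqP; split => // w /=; apply; rewrite /A /= /Sg.
  by rewrite big1 ?mulr_ge0 // => i _; rewrite g0.
have Bp : 0 < Bref.
  rewrite lt_neqAle B0 andbT; apply/eqP => B00; apply: gn0 => z.
  by apply/eqP; rewrite -normr_le0 B00 HB.
have neq : fref <> fstar by move=> ff; apply: gn0 => z; rewrite /g ff subrr.
have mLs : measurable_fun setT (fun w => L fstar (Z w)) by apply: measurableT_comp => //; exact: HLmeas.
have mLr : measurable_fun setT (fun w => L fref (Z w)) by apply: measurableT_comp => //; exact: HLmeas.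
have mgZ : measurable_fun setT (fun w => g (Z w)) by exact: measurableT_comp.
have efin : (e_orig P L Z fstar < +oo)%E.
  rewrite ltNge leye_eq; apply/negP => /eqP einf.
  apply: neq; apply: Huniq => //; rewrite einf; exact: leey.
have intLs : P.-integrable setT (fun w => (L fstar (Z w))%:E).
  apply/integrableP; split; first exact/measurable_EFinP.
  under eq_integral do rewrite gee0_abs ?lee_fin //.
  exact: efin.
have bg : [bounded g (Z w) | w in setT].
  exists Bref; split; first by rewrite num_real.
  move=> M BM w _; apply: le_trans (HB (Z w)) (ltW BM).
have intg : P.-integrable setT (fun w => (g (Z w))%:E).
  apply: measurable_bounded_integrable => //; first by rewrite -ge0_fin_numE // fin_num_measure.
have intLr : P.-integrable setT (fun w => (L fref (Z w))%:E).
  have -> : (fun w => (L fref (Z w))%:E) = (fun w => (L fstar (Z w))%:E - (g (Z w))%:E)%E.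
    by apply/funext => w; rewrite -EFinB /g opprB addrCA subrr addr0.
  exact: integrableB.
have Eg : (\int[P]_w (g (Z w))%:E <= 0)%E.
  under eq_integral do rewrite /g EFinB.
  rewrite integralB //.
  rewrite sube_le0; exact: Hmin.
set s := eps / Bref ^+ 2.
have s0 : 0 <= s by rewrite divr_ge0 // exprn_ge0.
pose ex t := expR (s * g t).
have mex : measurable_fun setT ex.
  by apply: measurableT_comp => //; apply: measurable_funM.
have ex0 t : 0 <= ex t by exact: expR_ge0.
set a := (expR (s * Bref) + expR (- (s * Bref))) / 2.
set b := (expR (s * Bref) - expR (- (s * Bref))) / (2 * Bref).
have b0 : 0 <= b.
  rewrite divr_ge0 ?mulr_ge0 // subr_ge0 ler_expR.
  have : 0 <= s * Bref by rewrite mulr_ge0.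
  lra.
have exb z : ex z <= a + b * g z.
  have gz : - Bref <= g z <= Bref by rewrite -ler_norml HB.
  have := @conv_bound R Bref s (g z) Bp gz.
  suff -> : ((Bref + g z) * expR (s * Bref) + (Bref - g z) * expR (- (s * Bref))) / (2 * Bref)
     = a + b * g z by [].
  rewrite /a /b; field; lra.
have Eex : (\int[P]_w (ex (Z w))%:E <= a%:E)%E.
  apply: (@le_trans _ _ (\int[P]_w (a + b * g (Z w))%:E)%E).
    apply: ge0_le_integral => //.
    - by move=> w _; rewrite lee_fin.
    - by apply/measurable_EFinP; apply: measurableT_comp.
    - apply/measurable_EFinP; apply: measurable_funD => //.
      by apply: measurable_funM.
    - by move=> w _; rewrite lee_fin.
  under eq_integral do rewrite EFinD (EFinM b).
  rewrite integralD //.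
  - rewrite integralZl // integral_cst //=.
    set PT := P [set: Omega].
    have -> : PT = 1%E by exact: probability_setT.
    rewrite mule1.
    apply: geeDl; apply: mule_ge0_le0 => //; rewrite lee_fin //.
  - exact: finite_measure_integrable_cst.
  - exact: integrableZl.
have aK : a <= expR ((s * Bref) ^+ 2 / 2).
  rewrite /a ler_pdivrMr //; have := @cosh_le R (s * Bref); lra.
have Ei i : (\int[P]_w (ex (Zs i w))%:E = \int[P]_w (ex (Z w))%:E)%E.
  exact: (@id_int _ _ _ _ _ P (Zs i) Z (HZs i) HZ (Hid i) ex mex ex0).
have Eex0 : (0 <= \int[P]_w (ex (Z w))%:E)%E.
  by apply: integral_ge0 => w _; rewrite lee_fin.
have Ef : (\int[P]_w (ex (Z w))%:E)%E \is a fin_num.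
  by rewrite ge0_fin_numE // (le_lt_trans Eex) // ltry.
set K := fine (\int[P]_w (ex (Z w))%:E)%E.
have KE : (\int[P]_w (ex (Z w))%:E)%E = K%:E by rewrite fineK.
have K0 : 0 <= K by rewrite -lee_fin -KE.
have Ka : K <= a by rewrite -lee_fin -KE.
have ef i : (\int[P]_w (ex (Zs i w))%:E)%E \is a fin_num by rewrite Ei.
have CA := @claim_all _ _ _ _ _ P n Zs HZs Hind ex mex ex0 ef.
have Mk : ((expR (s * (n%:R * eps)))%:E * P (~` A) <= (K ^+ n)%:E)%E.
  have mcA : measurable (~` A) by exact: measurableC.
  have -> : ((expR (s * (n%:R * eps)))%:E * P (~` A) =
      \int[P]_w ((expR (s * (n%:R * eps))) * \1_(~` A) w)%:E)%E.
    under eq_integral do rewrite EFinM.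
    rewrite ge0_integralZl_EFin //.
    - by rewrite integral_indic // setIT.
    - by apply/measurable_EFinP; exact: measurable_indic.
  apply: (@le_trans _ _ (\int[P]_w (\prod_i ex (Zs i w))%:E)%E).
    apply: ge0_le_integral => //.
    - apply/measurable_EFinP; apply: measurable_funM => //; exact: measurable_indic.
    - apply/measurable_EFinP; apply: measurable_prod => i _; exact: measurableT_comp.
    - move=> w _; rewrite lee_fin indicE.
      have [wA|wA] := boolP (w \in ~` A).
        rewrite mulr1 /ex -expR_sum ler_expR -mulr_sumr ler_wpM2l //.
        move: wA; rewrite in_setC /A notin_setE /= => /negP; rewrite -ltNge; exact: ltW.
      by rewrite mulr0 prodr_ge0.
  rewrite CA; under eq_bigr do rewrite Ei KE.
  by rewrite prodEFin prod_const_ord.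
have pf : P (~` A) \is a fin_num by apply: fin_num_measure; exact: measurableC.
set p := fine (P (~` A)).
have pE : P (~` A) = p%:E by rewrite fineK.
move: Mk; rewrite pE -EFinM lee_fin => Mk.
rewrite lee_fin.
set E := expR (s * (n%:R * eps)).
have E0 : 0 < E by exact: expR_gt0.
have Kn : K ^+ n <= expR (n%:R * ((s * Bref) ^+ 2 / 2)).
  rewrite expRM_natl; apply: lerXn2r => //; rewrite ?nnegrE ?expR_ge0 //.
  exact: le_trans Ka aK.
have : p <= expR (n%:R * ((s * Bref) ^+ 2 / 2)) / E.
  rewrite ler_pdivlMr // mulrC; exact: le_trans Mk Kn.
rewrite -expRB.
set r := Num.sqrt q.
have r2 : r ^+ 2 = q by exact: sqr_sqrtr.
have Bn0 : Bref != 0 by rewrite gt_eqF.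
have nn0 : n%:R != 0 :> R by rewrite gt_eqF.
have -> : n%:R * ((s * Bref) ^+ 2 / 2) - s * (n%:R * eps) = - (2 * n%:R * r ^+ 2).
  rewrite /s /eps -/r; field; exact: Bn0.
rewrite r2 /q.
have -> : 2 * n%:R * (ln delta^-1 / (2 * n%:R)) = ln delta^-1 by field.
rewrite lnV ?posrE // opprK lnK ?posrE //.
Qed.
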